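(* There is an absolute constant $C > 0$ such that for every $L \geq 1$, $m \geq 1$, $k^* \in [m]$, $i \in \{0,\ldots,L\}$, $k\in[m]$ and $\lambda \in [m]^{L+1}$, the length (number of elementary steps) of the path $\gamma_{\lambda,\lambda_{[i,k]}}$ satisfies $|\gamma_{\lambda,\lambda_{[i,k]}}| \leq C L^{\log_2 3}$.
   Context: States are $\lambda = (\lambda_0,\ldots,\lambda_L) \in [m]^{L+1}$; coordinate $\ell$ is level $\ell$. $\lambda_{[i,k]}$ is $\lambda$ with the level-$i$ entry replaced by $k$. The procedure $\mathbf{Swap}(a,b)$ ($0\le a\le b\le L$): if $b - a \leq 1$, perform the single elementary operation exchanging the entries at levels $a$ and $b$; otherwise with $h = \lfloor (a+b)/2 \rfloor$ perform $\mathbf{Swap}(a,h)$, then $\mathbf{Swap}(h,b)$, then $\mathbf{Swap}(a,h)$. The path $\gamma_{\lambda,\lambda_{[i,k]}}$ (with $k^*$ a fixed element of $[m]$) starts at $\lambda$ and performs in order the elementary or recursive operations: (1) set the level-0 entry to $k^*$; (2) $\mathbf{Swap}(0,i)$; (3) set the level-0 entry to $k$; (4) $\mathbf{Swap}(0,i)$; (5) set the level-0 entry to $\lambda_0$. Its length $|\gamma_{\lambda,\lambda_{[i,k]}}|$ is the total number of elementary operations performed. *)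

(* Defs.v *)
From mathcomp Require Import all_boot.
From Stdlib Require Import Reals.
Set Implicit Arguments. Unset Strict Implicit. Unset Printing Implicit Defensive.

(* States: lambda : {ffun 'I_L.+1 -> 'I_m}; entry at level l is lambda l.
   [m] is modelled by 'I_m (labels 0..m-1 instead of 1..m; immaterial). *)

Inductive elem_op (m : nat) : Type :=
| SetLevel0 of 'I_m
| Exch of nat & nat.

(* Semantics of an elementary operation (levels out of range: no-op). *)
Definition apply_op (L m : nat) (o : elem_op m) (s : {ffun 'I_L.+1 -> 'I_m})
  : {ffun 'I_L.+1 -> 'I_m} :=
  match o with
  | SetLevel0 v => [ffun l : 'I_L.+1 => if val l == 0 then v else s l]
  | Exch a b => [ffun l : 'I_L.+1 =>
       if val l == a then s (inord b)
       else if val l == b then s (inord a) else s l]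
  end.

(* Swap(a,b), computed with fuel b - a (which suffices, since each recursive
   call strictly decreases b - a when b - a >= 2). *)
Fixpoint swap_aux (m : nat) (fuel a b : nat) : seq (elem_op m) :=
  match fuel with
  | 0 => [:: Exch m a b]
  | f.+1 =>
      if b - a <= 1 then [:: Exch m a b]
      else let h := (a + b)./2 in
           swap_aux m f a h ++ swap_aux m f h b ++ swap_aux m f a h
  end.

Definition Swap (m a b : nat) : seq (elem_op m) := swap_aux m (b - a) a b.

Definition gamma_ops (L m : nat) (kstar : 'I_m) (lambda : {ffun 'I_L.+1 -> 'I_m})
  (i : 'I_L.+1) (k : 'I_m) : seq (elem_op m) :=
  [:: SetLevel0 kstar] ++ Swap m 0 i ++ [:: SetLevel0 k] ++ Swap m 0 i
  ++ [:: SetLevel0 (lambda ord0)].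

Definition gamma_states (L m : nat) (kstar : 'I_m) (lambda : {ffun 'I_L.+1 -> 'I_m})
  (i : 'I_L.+1) (k : 'I_m) : seq {ffun 'I_L.+1 -> 'I_m} :=
  scanl (fun s o => apply_op o s) lambda (gamma_ops kstar lambda i k).

Definition gamma_length (L m : nat) (kstar : 'I_m) (lambda : {ffun 'I_L.+1 -> 'I_m})
  (i : 'I_L.+1) (k : 'I_m) : nat :=
  size (gamma_ops kstar lambda i k).

(* Main.v *)
Require Import Defs.
From mathcomp Require Import all_boot zify.
From Stdlib Require Import Reals Lra.

Lemma swap_size m f : forall a b n, b - a <= (expn 2 n) ->
  size (swap_aux m f a b) <= (expn 3 n).
Proof.
elim: f => [|f IH] a b n H /=.
  by rewrite expn_gt0.
case: ifP => Hd /=; first by rewrite expn_gt0.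
case: n H => [|n] H; first by rewrite expn0 in H; lia.
rewrite !size_cat expnS.
have H1 : (a + b)./2 - a <= (expn 2 n) by rewrite expnS in H; lia.
have H2 : b - (a + b)./2 <= (expn 2 n) by rewrite expnS in H; lia.
have := IH _ _ _ H1; have := IH _ _ _ H2; lia.
Qed.

Lemma INR_expn a n : INR (expn a n) = (INR a ^ n)%R.
Proof. elim: n => [|n IH]; first by rewrite expn0.
by rewrite expnS -multE mult_INR IH /=. Qed.

Lemma pow_bound {L n : nat} : ((expn 2 n) <= L)%N ->
  (INR ((expn 3 n)) <= Rpower (INR L) (ln 3 / ln 2))%R.
Proof.
move=> H.
have ln2 : (0 < ln 2)%R by rewrite -ln_1; apply: ln_increasing; lra.
have ln3 : (0 < ln 3)%R by rewrite -ln_1; apply: ln_increasing; lra.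
apply: Rle_trans (_ : Rpower (INR ((expn 2 n))) (ln 3 / ln 2) <= _)%R.
  rewrite !INR_expn.
  have -> : INR 3 = 3%R by simpl; lra.
  have -> : INR 2 = 2%R by simpl; lra.
  rewrite /Rpower ln_pow; last lra.
  rewrite -(@Rpower_pow n 3); last lra.
  rewrite /Rpower; apply: Req_le; f_equal; field; lra.
apply: Rle_Rpower_l.
  apply: Rlt_le; apply: Rdiv_lt_0_compat; lra.
split; first by apply: lt_0_INR; apply/ltP; rewrite expn_gt0.
by apply: le_INR; apply/leP.
Qed.

Theorem lemma5 :
  exists C : R, (0 < C)%R /\
    forall (L m : nat) (kstar : 'I_m) (i : 'I_L.+1) (k : 'I_m)
           (lambda : {ffun 'I_L.+1 -> 'I_m}),
      (1 <= L)%N -> (1 <= m)%N ->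
      (INR (gamma_length kstar lambda i k)
         <= C * Rpower (INR L) (ln 3 / ln 2))%R.
Proof.
exists 9%R; split; first lra.
move=> L m kstar i k lambda HL Hm.
have [Hlo Hhi] := andP (trunc_log_bounds (isT : 1 < 2) HL).
set n := trunc_log 2 L in Hlo Hhi.
have Hs : size (Swap m 0 i) <= 3 * (expn 3 n).
  rewrite -expnS /Swap; apply: swap_size.
  have := ltn_ord i; lia.
have Hp := pow_bound Hlo.
have H1 : (1 <= INR ((expn 3 n)))%R.
  by rewrite -[1%R]/(INR 1); apply: le_INR; apply/leP; rewrite expn_gt0.
have Hg : (gamma_length kstar lambda i k <= 3 + 6 * (expn 3 n))%N.
  move: Hs; rewrite /gamma_length /gamma_ops; set s := Swap m 0 i; rewrite !size_cat /=; lia.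
apply: Rle_trans (_ : INR (3 + 6 * (expn 3 n)) <= _)%R.
  by apply: le_INR; apply/leP.
rewrite plus_INR mult_INR.
have -> : INR 3 = 3%R by simpl; lra.
have -> : INR 6 = 6%R by simpl; lra.
lra.
Qed.
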